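(* Let $d\colon A\to B$ be a homomorphism of finite abelian groups. Then the set of maximal elements of $\operatorname{Dec}_\mathcal{I}(d)$ equals one orbit of $\operatorname{Dec}_\mathcal{I}(d)$ under the action of $U^*(d)$.
   Context: A restriction of $d$ is a homomorphism $d'\colon A'\to B'$ with $A'\subset A$, $B'\subset B$ subgroups and $d'(a)=d(a)$ for $a\in A'$ (so $d(A')\subset B'$). $\operatorname{Dec}(d)$ is the set of pairs $(d_0,d_1)$ of restrictions $d_i\colon A_i\to B_i$ of $d$ with $A_0\oplus A_1=A$ and $B_0\oplus B_1=B$ (internal direct sums), partially ordered by $(d_0,d_1)\leq(d_0',d_1')$ iff there is a restriction $c\colon C\to D$ of $d$ with $A_0=A_0'\oplus C$, $B_0=B_0'\oplus D$, $A_1\oplus C=A_1'$, $B_1\oplus D=B_1'$. $\operatorname{Dec}_\mathcal{I}(d)$ is the subset of $(d_0,d_1)\in\operatorname{Dec}(d)$ with $d_1$ an isomorphism, with the induced order. $Q(d)=\mathbb{Z}\oplus\operatorname{Hom}(B,A)$ is the ring with multiplication $(m,f)\star(n,g)=(mn,mg+nf+f\circ d\circ g)$; $U(d)=1+\operatorname{Hom}(B,A)$ and $U^*(d)=U(d)\cap Q(d)^*$, a group. $U^*(d)$ acts on $d$ via the homomorphism $1+f\mapsto(\mathrm{id}_A+f\circ d,\ \mathrm{id}_B+d\circ f)$ into the group of pairs $(\alpha,\beta)\in\operatorname{Aut}(A)\times\operatorname{Aut}(B)$ with $\beta d=d\alpha$, and such a pair acts on $\operatorname{Dec}(d)$ by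 sending $(d_i\colon A_i\to B_i)_{i=0,1}$ to the restrictions $\alpha(A_i)\to\beta(B_i)$. *)

(* Defs.v *)
From HB Require Import structures.
From mathcomp Require Import all_boot all_order all_algebra.
Set Implicit Arguments. Unset Strict Implicit. Unset Printing Implicit Defensive.
Import Order.TTheory GRing.Theory Num.Theory.
Local Open Scope ring_scope.

Section Dec.
Variables (A B : finZmodType).

Definition subgrp (G : finZmodType) (S : {set G}) : Prop :=
  0 \in S /\ forall x y, x \in S -> y \in S -> x - y \in S.

Definition idsum (G : finZmodType) (S S0 S1 : {set G}) : Prop :=
  [/\ subgrp S0, subgrp S1, S0 :&: S1 = [set 0]
    & S = [set x + y | x in S0, y in S1]].

Definition restr (d : A -> B) (X : {set A}) (Y : {set B}) : Prop :=
  [/\ subgrp X, subgrp Y & d @: X \subset Y].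

(* a pair (d0 : A0 -> B0, d1 : A1 -> B1) of restrictions *)
Record decomp := Decomp {
  dA0 : {set A}; dB0 : {set B}; dA1 : {set A}; dB1 : {set B} }.

Definition in_Dec (d : A -> B) (x : decomp) : Prop :=
  [/\ restr d (dA0 x) (dB0 x), restr d (dA1 x) (dB1 x),
      idsum [set: A] (dA0 x) (dA1 x) & idsum [set: B] (dB0 x) (dB1 x)].

Definition dec_le (d : A -> B) (x y : decomp) : Prop :=
  exists (C : {set A}) (D : {set B}),
    [/\ restr d C D,
        idsum (dA0 x) (dA0 y) C, idsum (dB0 x) (dB0 y) D,
        idsum (dA1 y) (dA1 x) C & idsum (dB1 y) (dB1 x) D].

Definition in_DecI (d : A -> B) (x : decomp) : Prop :=
  [/\ in_Dec d x, {in dA1 x &, injective d} & d @: dA1 x = dB1 x].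

Definition DecI_max (d : A -> B) (x : decomp) : Prop :=
  in_DecI d x /\ forall y, in_DecI d y -> dec_le d x y -> y = x.

Definition is_hom (f : B -> A) : Prop := forall u v, f (u + v) = f u + f v.

(* The ring Q(d) = Z (+) Hom(B, A), elements (m, f) with f a homomorphism *)
Definition qmul (d : A -> B) (p q : int * (B -> A)) : int * (B -> A) :=
  (p.1 * q.1, fun b => q.2 b *~ p.1 + p.2 b *~ q.1 + p.2 (d (q.2 b))).

Definition qeq (p q : int * (B -> A)) : Prop :=
  p.1 = q.1 /\ forall b, p.2 b = q.2 b.

Definition qone : int * (B -> A) := (1%R, fun _ => 0).

Definition qunit (d : A -> B) (p : int * (B -> A)) : Prop :=
  exists q : int * (B -> A), [/\ is_hom q.2, qeq (qmul d p q) qone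
                                 & qeq (qmul d q p) qone].

(* 1 + f belongs to U^*(d) = U(d) ∩ Q(d)^* *)
Definition Ustar (d : A -> B) (f : B -> A) : Prop :=
  is_hom f /\ qunit d (1%R, f).

Definition act (d : A -> B) (f : B -> A) (x : decomp) : decomp :=
  let al := fun a => a + f (d a) in
  let be := fun b => b + d (f b) in
  Decomp (al @: dA0 x) (be @: dB0 x) (al @: dA1 x) (be @: dB1 x).

End Dec.

(* Main.v *)
Require Import Defs.
From HB Require Import structures.
From mathcomp Require Import all_boot all_order all_algebra.
From mathcomp Require Import zify.
From Stdlib Require Import Classical.
Set Implicit Arguments. Unset Strict Implicit. Unset Printing Implicit Defensive.
Import Order.TTheory GRing.Theory Num.Theory.
Local Open Scope ring_scope.

Section Basics.
Variables (G H : finZmodType).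

Lemma hom0 (f : G -> H) : is_hom f -> f 0 = 0.
Proof. move=> hf; apply/eqP; rewrite -(addrI (f 0) (_ : f 0 + f 0 = f 0 + 0)) //.
by rewrite -hf !addr0. Qed.

Lemma homN (f : G -> H) : is_hom f -> forall x, f (- x) = - f x.
Proof. move=> hf x; apply/eqP; rewrite -subr_eq0 opprK -hf addNr hom0 //. Qed.

Lemma homB (f : G -> H) : is_hom f -> forall x y, f (x - y) = f x - f y.
Proof. by move=> hf x y; rewrite hf homN. Qed.

Definition kerf (F : G -> H) : {set G} := [set x | F x == 0].
Definition imf (F : G -> H) : {set H} := [set F x | x in [set: G]].

Lemma subgrp0 (S : {set G}) : subgrp S -> 0 \in S.
Proof. by case. Qed.
Lemma subgrpN (S : {set G}) : subgrp S -> forall x, x \in S -> - x \in S.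
Proof. by case=> h0 hB x hx; rewrite -sub0r hB. Qed.
Lemma subgrpD (S : {set G}) : subgrp S -> forall x y, x \in S -> y \in S -> x + y \in S.
Proof. move=> hS x y hx hy; rewrite -(opprK y); apply: hS.2 => //.
by apply: subgrpN. Qed.

Lemma subgrp_ker (F : G -> H) : is_hom F -> subgrp (kerf F).
Proof. move=> hF; split; first by rewrite inE hom0.
by move=> x y; rewrite !inE homB // => /eqP-> /eqP->; rewrite subrr. Qed.

Lemma subgrp_im (F : G -> H) : is_hom F -> subgrp (imf F).
Proof. move=> hF; split; first by apply/imsetP; exists 0; rewrite ?inE ?hom0.
move=> x y /imsetP[a _ ->] /imsetP[b _ ->]; apply/imsetP; exists (a - b); rewrite ?inE //.
by rewrite homB. Qed.

Lemma card_idsum (S S0 S1 : {set G}) : idsum S S0 S1 -> #|S| = (#|S0| * #|S1|)%N.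
Proof.
case=> h0 h1 hI ->; rewrite curry_imset2X card_in_imset ?cardsX //.
move=> [x y] [x' y']; rewrite !in_setX /= => /andP[hx hy] /andP[hx' hy'] e.
have hz : x - x' \in S0 :&: S1.
  rewrite inE; case: h0 => _ -> //=.
  have -> : x - x' = y' - y by rewrite -(addrK y x) e addrAC (addrC x') addrK.
  by case: h1 => _ ->.
move: hz; rewrite hI inE subr_eq0 => /eqP ex; subst x'.
by move/addrI: e => ->.
Qed.

Lemma card_gt0 (S : {set G}) : subgrp S -> (0 < #|S|)%N.
Proof. by move=> hS; apply/card_gt0P; exists 0; apply: subgrp0. Qed.

End Basics.
Section Idem.
Variable G : finZmodType.
Lemma idsum_kerim (P : G -> G) : is_hom P -> (forall x, P (P x) = P x) ->
  idsum [set: G] (kerf P) (imf P).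
Proof.
move=> hP hPP; split; [exact: subgrp_ker|exact: subgrp_im| |].
  apply/setP=> x; rewrite !inE; apply/andP/eqP.
    by case=> /eqP hx /imsetP[y _ ey]; rewrite -hx ey hPP.
  move=> ->; rewrite (hom0 hP) eqxx; split=> //; apply/imsetP; exists 0; rewrite ?inE ?hom0 //.
apply/setP=> x; rewrite inE; symmetry; apply/imset2P.
exists (x - P x) (P x); rewrite ?inE ?homB ?hPP ?subrr ?subrK //.
by apply/imsetP; exists x; rewrite ?inE.
Qed.

Lemma idsum_orth (E P : G -> G) : is_hom E -> is_hom P ->
  (forall x, E (E x) = E x) -> (forall x, P (P x) = P x) ->
  (forall x, E (P x) = 0) -> (forall x, P (E x) = 0) ->
  idsum (kerf E) (kerf (fun x => E x + P x)) (imf P) /\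
  idsum (imf (fun x => E x + P x)) (imf E) (imf P).
Proof.
move=> hE hP hEE hPP hEP hPE.
have hEPh : is_hom (fun x => E x + P x).
  by move=> u v; rewrite hE hP addrACA.
split; split; try exact: subgrp_ker; try exact: subgrp_im.
- apply/setP=> x; rewrite !inE; apply/andP/eqP.
    case=> /eqP hx /imsetP[y _ ey]; move: hx; rewrite ey hEP hPP add0r => ->.
    done.
  move=> ->; rewrite (hom0 hE) (hom0 hP) addr0 eqxx; split=> //; apply/imsetP; exists 0; rewrite ?inE ?hom0 //.
- apply/setP=> x; rewrite inE; apply/eqP/imset2P.
    move=> hx; exists (x - P x) (P x); rewrite ?inE ?subrK //; last first.
      by apply/imsetP; exists x; rewrite ?inE.
    by rewrite (homB hE) (homB hP) hx hEP hPP !subrr addr0.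
  case=> u v; rewrite inE => /eqP hu /imsetP[z _ ->] ->.
  have : E (E u + P u) = 0 by rewrite hu hom0.
  by rewrite hE hEE hEP addr0 => eu; rewrite hE eu hEP addr0.
- apply/setP=> x; rewrite !inE; apply/andP/eqP.
    case=> /imsetP[y _ ey] /imsetP[z _ ez].
    by rewrite ey -hEE -ey ez hEP.
  move=> ->; split; apply/imsetP; exists 0; rewrite ?inE ?hom0 //.
- apply/setP=> x; apply/imsetP/imset2P.
    case=> z _ ->; exists (E z) (P z) => //; apply/imsetP; exists z; rewrite ?inE //.
  case=> u v /imsetP[y _ ->] /imsetP[z _ ->] ->; exists (E y + P z); rewrite ?inE //.
  by rewrite hE hP hEE hEP hPE hPP addr0 add0r.
Qed.

End Idem.

Section Main.
Variables (A B : finZmodType) (d : {additive A -> B}).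

Lemma hd : is_hom d.
Proof. by move=> u v; rewrite raddfD. Qed.

Definition idem (g : B -> A) := is_hom g /\ forall b, g (d (g b)) = g b.

Definition dec_of (g : B -> A) : decomp A B :=
  Decomp (kerf (fun a => g (d a))) (kerf (fun b => d (g b)))
         (imf (fun a => g (d a))) (imf (fun b => d (g b))).

Lemma homC (X Y Z : finZmodType) (f : Y -> Z) (g : X -> Y) :
  is_hom f -> is_hom g -> is_hom (fun x => f (g x)).
Proof. by move=> hf hg u v; rewrite hg hf. Qed.

Lemma dec_of_DecI g : idem g -> in_DecI d (dec_of g).
Proof.
case=> hg hgg.
have hP : is_hom (fun a => g (d a)) by apply: homC => //; exact: hd.
have hQ : is_hom (fun b => d (g b)) by apply: homC => //; exact: hd.
split; first split.
- split; [exact: subgrp_ker|exact: subgrp_ker|].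
  apply/subsetP=> _ /imsetP[a ha ->]; rewrite inE in ha; rewrite inE.
  by rewrite (eqP ha) raddf0.
- split; [exact: subgrp_im|exact: subgrp_im|].
  apply/subsetP=> _ /imsetP[_ /imsetP[a _ ->] ->]; apply/imsetP; exists (d a) => //.
- by apply: idsum_kerim => // a; rewrite hgg.
- by apply: idsum_kerim => // b; rewrite hgg.
- move=> _ _ /imsetP[a _ ->] /imsetP[a' _ ->] /= e.
  by rewrite -hgg e hgg.
- apply/setP=> b; apply/imsetP/imsetP.
    by case=> _ /imsetP[a _ ->] ->; exists (d a).
  case=> b' _ ->; exists (g (d (g b'))); first by apply/imsetP; exists (g b').
  by rewrite hgg.
Qed.

Lemma DecI_dec_of x : in_DecI d x -> exists g, idem g /\ x = dec_of g.
Proof.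
case: x => A0 B0 A1 B1 /=.
case=> [[[hA0 hB0 hd0] [hA1 hB1 hd1] [_ _ iA eA] [_ _ iB eB]] inj im].
simpl in *.
pose g b := odflt 0 [pick a in A1 | b - d a \in B0].
have gP : forall b, g b \in A1 /\ b - d (g b) \in B0.
  move=> b; rewrite /g; case: pickP => [a /andP[]|h] //=.
  have : b \in [set: B] by rewrite inE.
  rewrite eB => /imset2P[b0 b1 hb0 hb1 eb].
  rewrite -im in hb1; case/imsetP: hb1 => a1 ha1 e1.
  by move: (h a1) => /=; rewrite ha1 eb -e1 addrK hb0.
have guniq : forall b a, a \in A1 -> b - d a \in B0 -> g b = a.
  move=> b a ha hb; have [ga gb] := gP b.
  have h0 : d (g b) - d a \in B0 :&: B1.
    rewrite inE; apply/andP; split.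
      have -> : d (g b) - d a = (b - d a) - (b - d (g b)).
        by rewrite [RHS]addrC opprB addrA subrK.
      by apply: hB0.2.
    apply: hB1.2; rewrite -im; apply/imsetP; [exists (g b)|exists a] => //.
  move: h0; rewrite iB inE subr_eq0 => /eqP.
  by apply: inj.
have hg : is_hom g.
  move=> u v; apply: guniq; first by apply: subgrpD => //; [exact: (gP u).1|exact: (gP v).1].
  have -> : u + v - d (g u + g v) = (u - d (g u)) + (v - d (g v)).
    by rewrite raddfD opprD addrACA.
  by apply: subgrpD => //; [exact: (gP u).2|exact: (gP v).2].
have hgg : forall b, g (d (g b)) = g b.
  by move=> b; apply: guniq; [exact: (gP b).1|rewrite subrr; exact: subgrp0].
have gd1 : forall a, a \in A1 -> g (d a) = a.
  by move=> a ha; apply: guniq => //; rewrite subrr; exact: subgrp0.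
have gd0 : forall b, b \in B0 -> g b = 0.
  by move=> b hb; apply: guniq; [exact: subgrp0|rewrite raddf0 subr0].
exists g; split; first by split.
rewrite /dec_of; congr Decomp; apply/setP.
- move=> a; rewrite inE; apply/idP/eqP.
    move=> ha; apply: gd0; apply: (subsetP hd0); apply/imsetP; exists a => //.
  have : a \in [set: A] by rewrite inE.
  rewrite eA => /imset2P[a0 a1 ha0 ha1 ->].
  rewrite raddfD hg (gd1 a1 ha1) (gd0 (d a0)); last by apply: (subsetP hd0); apply/imsetP; exists a0.
  by rewrite add0r => ->; rewrite addr0.
- move=> b; rewrite inE; apply/idP/eqP.
    by move=> hb; rewrite gd0 // raddf0.
  by move=> e; have := (gP b).2; rewrite e subr0.
- move=> a; apply/idP/imsetP.
    by move=> ha; exists a; rewrite ?inE ?gd1.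
  by case=> a' _ ->; exact: (gP _).1.
- move=> b; apply/idP/imsetP.
    rewrite -im => /imsetP[a ha ->]; exists (d a); rewrite ?inE ?gd1 //.
  case=> b' _ ->; rewrite -im; apply/imsetP; exists (g b') => //; exact: (gP _).1.
Qed.

Lemma kerf_ext (X Y : finZmodType) (F F' : X -> Y) : F =1 F' -> kerf F = kerf F'.
Proof. by move=> e; apply/setP=> x; rewrite !inE e. Qed.
Lemma imf_ext (X Y : finZmodType) (F F' : X -> Y) : F =1 F' -> imf F = imf F'.
Proof. by move=> e; apply: eq_imset. Qed.

Lemma homSub (X Y : finZmodType) (F G : X -> Y) :
  is_hom F -> is_hom G -> is_hom (fun x => F x - G x).
Proof. by move=> hF hG u v; rewrite hF hG opprD addrACA. Qed.

Lemma homD (X Y : finZmodType) (F G : X -> Y) :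
  is_hom F -> is_hom G -> is_hom (fun x => F x + G x).
Proof. by move=> hF hG u v; rewrite hF hG addrACA. Qed.

Fixpoint pw (h : B -> A) (n : nat) : B -> A :=
  match n with 0 => h | n'.+1 => fun b => h (d (pw h n' b)) end.

Definition nilp (h : B -> A) := exists n, forall b, pw h n b = 0.

Lemma pw_add h a c b : pw h (a + c)%N.+1 b = pw h a (d (pw h c b)).
Proof. elim: a b => [|a IH] b; first by rewrite add0n.
by rewrite addSn; exact: (congr1 (fun x => h (d x)) (IH b)). Qed.

Lemma pw_hom h n : is_hom h -> is_hom (pw h n).
Proof. by move=> hh; elim: n => [|n IH] //= u v; rewrite IH raddfD hh. Qed.

Lemma pw_rep h i j : (i < j)%N -> (forall b, pw h i b = pw h j b) ->
  forall m t b, pw h (i + t + m * (j - i))%N b = pw h (i + t)%N b.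
Proof.
move=> lij e.
have one : forall s b, pw h (i + s + (j - i))%N b = pw h (i + s)%N b.
  case=> [|s] b.
    by rewrite addn0 subnKC ?(ltnW lij) // e.
  have -> : (i + s.+1 + (j - i) = (s + j).+1)%N by lia.
  have -> : (i + s.+1 = (s + i).+1)%N by lia.
  by rewrite !pw_add e.
elim=> [|m IH] t b; first by rewrite mul0n addn0.
have -> : (i + t + m.+1 * (j - i) = i + (t + m * (j - i)) + (j - i))%N by rewrite mulSn; lia.
by rewrite one addnA IH.
Qed.

Lemma pw_idem h : exists k, forall b, pw h k (d (pw h k b)) = pw h k b.
Proof.
pose F (n : nat) : {ffun B -> A} := [ffun b => pw h n b].
pose N := #|{ffun B -> A}|.
have [i [j [lij eij]]] : exists i j, (i < j)%N /\ F i = F j.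
  case: (boolP [exists x : 'I_N.+1, exists y : 'I_N.+1, (x < y)%N && (F x == F y)]).
    case/existsP=> x /existsP[y /andP[lxy /eqP e]]; by exists x, y.
  move=> hne; have inj : injective (fun x : 'I_N.+1 => F x).
    move=> x y e; apply/eqP; case: (ltngtP x y) => [lxy|lyx|] //; last by move/val_inj->.
      by case/negP: hne; apply/existsP; exists x; apply/existsP; exists y; rewrite lxy e eqxx.
    by case/negP: hne; apply/existsP; exists y; apply/existsP; exists x; rewrite lyx e eqxx.
  by have := leq_card _ inj; rewrite card_ord ltnn.
have e : forall b, pw h i b = pw h j b.
  by move=> b; have := congr1 (fun f : {ffun B -> A} => f b) eij; rewrite !ffunE.
pose c := (j - i)%N; pose M := (c * i.+1)%N.
have hM : (i.+1 <= M)%N by rewrite /M /c; nia.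
exists (i + (M - i.+1))%N => b.
rewrite -pw_add.
have -> : ((i + (M - i.+1)) + (i + (M - i.+1)))%N.+1 = (i + (M - i.+1) + i.+1 * (j - i))%N.
  by rewrite /M /c in hM *; nia.
by rewrite pw_rep.
Qed.

Definition hh (g' k : B -> A) (b : B) : A :=
  k (b - d (g' b)) - g' (d (k (b - d (g' b)))).

Lemma grow g' k : idem g' -> is_hom k -> ~ nilp (hh g' k) ->
  exists g2, [/\ idem g2, dec_le d (dec_of g') (dec_of g2) &
    (#|imf (fun a => g' (d a))| < #|imf (fun a => g2 (d a))|)%N].
Proof.
case=> hg hgg hk hnil.
have hh_hom : is_hom (hh g' k).
  have hid : is_hom (fun b : B => b) by [].
  have hQB := homSub hid (homC hd hg).
  have hkQ := homC hk hQB.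
  exact: (homSub hkQ (homC hg (homC hd hkQ))).
have hL : forall b, g' (d (hh g' k b)) = 0.
  by move=> b; rewrite /hh raddfB (homB hg) hgg subrr.
have hR : forall b, hh g' k (d (g' b)) = 0.
  by move=> b; rewrite /hh hgg subrr (hom0 hk) raddf0 (hom0 hg) subrr.
case: (pw_idem (hh g' k)) => n hpp.
set p := pw (hh g' k) n in hpp.
have hp : is_hom p by apply: pw_hom.
have pL' : forall m b, g' (d (pw (hh g' k) m b)) = 0.
  by elim=> [|m IH] b //=; exact: hL.
have pR' : forall m b, pw (hh g' k) m (d (g' b)) = 0.
  elim=> [|m IH] b /=; first exact: hR.
  by rewrite IH raddf0 (hom0 hh_hom).
have pL : forall b, g' (d (p b)) = 0 by exact: pL'.
have pR : forall b, p (d (g' b)) = 0 by exact: pR'.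
have [b0 hb0] : exists b0, p b0 != 0.
  case: (boolP [forall b, p b == 0]) => [/forallP h|/forallPn[b hb]]; last by exists b.
  by case: hnil; exists n => b; apply/eqP; exact: h.
pose g2 := fun b => g' b + p b.
have hg2 : idem g2.
  split; first by move=> u v; rewrite /g2 hg hp addrACA.
  by move=> b; rewrite /g2 raddfD hg hp hgg pL pR hpp addr0 add0r.
have hPA := homC hp hd; have hEA := homC hg hd.
have hPB := homC hd hp; have hEB := homC hd hg.
have [oA1 oA2] := @idsum_orth A (fun a => g' (d a)) (fun a => p (d a)) hEA hPA
  (fun a => hgg (d a)) (fun a => hpp (d a)) (fun a => pL (d a)) (fun a => pR (d a)).
have [oB1 oB2] := @idsum_orth B (fun b => d (g' b)) (fun b => d (p b)) hEB hPB
  (fun b => congr1 d (hgg b)) (fun b => congr1 d (hpp b))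
  (fun b => etrans (congr1 d (pL b)) (raddf0 d)) (fun b => etrans (congr1 d (pR b)) (raddf0 d)).
have eB1 : kerf (fun b => d (g2 b)) = kerf (fun b => d (g' b) + d (p b)).
  by apply: kerf_ext => b; rewrite /g2 raddfD.
have eB2 : imf (fun b => d (g2 b)) = imf (fun b => d (g' b) + d (p b)).
  by apply: imf_ext => b; rewrite /g2 raddfD.
exists g2; split => //.
  exists (imf (fun a => p (d a))), (imf (fun b => d (p b))); split => //=; rewrite ?eB1 ?eB2 //.
  split; [exact: subgrp_im|exact: subgrp_im|].
  apply/subsetP=> _ /imsetP[_ /imsetP[a _ ->] ->]; apply/imsetP; exists (d a) => //.
rewrite (card_idsum oA2).
have h1 : (1 < #|imf (fun a => p (d a))|)%N.
  apply/card_gt1P; exists 0, (p b0); split => //.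
  - by apply/imsetP; exists 0; rewrite ?inE // raddf0 (hom0 hp).
  - by apply/imsetP; exists (p b0); rewrite ?inE ?hpp.
  - by rewrite eq_sym.
have h2 : (0 < #|imf (fun a => g' (d a))|)%N by apply: card_gt0; exact: subgrp_im.
nia.
Qed.

Lemma nil_A h : nilp h -> forall u : A, u = h (d u) -> u = 0.
Proof.
case=> n hn u hu; have : forall m, u = pw h m (d u).
  by elim=> [|m IH] //=; rewrite -IH.
by move/(_ n); rewrite hn.
Qed.

Lemma nil_B h : nilp h -> forall u : B, u = d (h u) -> u = 0.
Proof.
case=> n hn u hu; have : forall m, u = d (pw h m u).
  by elim=> [|m IH] //=; rewrite -IH.
by move/(_ n); rewrite hn raddf0.
Qed.

Lemma img_eq (G : finZmodType) (phi : G -> G) (K I K' I' : {set G}) :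
  injective phi -> idsum [set: G] K I -> idsum [set: G] K' I' ->
  phi @: K \subset K' -> phi @: I \subset I' -> phi @: K = K' /\ phi @: I = I'.
Proof.
move=> inj s s' sK sI.
have c := card_idsum s; have c' := card_idsum s'.
have lK := subset_leq_card sK; have lI := subset_leq_card sI.
rewrite !card_imset // in lK lI.
have pK : (0 < #|K|)%N by apply: card_gt0; case: s.
have pI : (0 < #|I|)%N by apply: card_gt0; case: s.
have eK : #|K| = #|K'| by nia.
have eI : #|I| = #|I'| by nia.
split; apply/eqP; rewrite eqEcard ?sK ?sI card_imset // ?eK ?eI leqnn //.
Qed.

Lemma inj_of_zero (X Y : finZmodType) (F : X -> Y) : is_hom F ->
  (forall x, F x = 0 -> x = 0) -> injective F.
Proof.
move=> hF h x y e; apply/eqP; rewrite -subr_eq0; apply/eqP/h.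
by rewrite (homB hF) e subrr.
Qed.

Lemma orbit g g' : idem g -> idem g' -> nilp (hh g' g) -> nilp (hh g g') ->
  exists f, Ustar d f /\ act d f (dec_of g) = dec_of g'.
Proof.
case=> hg hgg [hg' hgg'] n1 n2.
pose f b := (g' (d (g b)) - g b) + (g' (d (g b)) - g' b).
have hf : is_hom f.
  have hid : is_hom (fun b : B => b) by [].
  have hgdg := homC hg' (homC hd hg).
  exact: (homD (homSub hgdg hg) (homSub hgdg hg')).
pose al a := a + f (d a).
pose be b := b + d (f b).
have hal : is_hom al by move=> u v; rewrite /al raddfD hf addrACA.
have hbe : is_hom be by move=> u v; rewrite /be hf raddfD addrACA.
have kA : forall a, g (d a) = 0 -> al a = a - g' (d a).
  by move=> a e; rewrite /al /f e raddf0 (hom0 hg') subrr !add0r.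
have iA : forall a, al (g (d a)) = g' (d (g (d a))).
  by move=> a; rewrite /al /f hgg subrr addr0 addrC subrK.
have kB : forall b, d (g b) = 0 -> be b = b - d (g' b).
  by move=> b e; rewrite /be /f e (hom0 hg') !sub0r raddfD !raddfN e oppr0 add0r.
have iB : forall b, be (d (g b)) = d (g' (d (g b))).
  by move=> b; rewrite /be /f hgg subrr addr0 raddfB addrC subrK.
have al_inj : injective al.
  apply: inj_of_zero => // a e.
  pose u := a - g (d a); pose w := g (d a).
  have ea : a = u + w by rewrite /u /w subrK.
  have gu : g (d u) = 0 by rewrite /u raddfB (homB hg) hgg subrr.
  have gw : g (d w) = w by rewrite /w hgg.
  have e2 : u - g' (d u) + g' (d w) = 0 by rewrite -kA // /w -iA -hal -ea.
  have e3 : g' (d w) = 0.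
    have := congr1 (fun x => g' (d x)) e2; rewrite /= raddf0 (hom0 hg').
    by rewrite raddfD hg' raddfB (homB hg') hgg' hgg' subrr add0r.
  rewrite e3 addr0 in e2; move/eqP: e2; rewrite subr_eq0 => /eqP e2.
  have u0 : u = 0.
    by apply: (nil_A n2); rewrite /hh gu raddf0 !subr0 -e2 gu subr0.
  have w0 : w = 0.
    apply: (nil_A n1); rewrite /hh e3 raddf0 subr0 gw e3 subr0.
    done.
  by rewrite ea u0 w0 addr0.
have be_inj : injective be.
  apply: inj_of_zero => // b e.
  pose u := b - d (g b); pose w := d (g b).
  have eb : b = u + w by rewrite /u /w subrK.
  have gu : d (g u) = 0 by rewrite /u (homB hg) raddfB hgg subrr.
  have gw : g w = g b by rewrite /w hgg.
  have e2 : u - d (g' u) + d (g' w) = 0 by rewrite -kB // /w -iB -hbe -eb.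
  have e3 : d (g' w) = 0.
    have := congr1 (fun x => d (g' x)) e2; rewrite /= (hom0 hg') raddf0.
    by rewrite hg' raddfD (homB hg') raddfB hgg' hgg' subrr add0r.
  rewrite e3 addr0 in e2; move/eqP: e2; rewrite subr_eq0 => /eqP e2.
  have u0 : u = 0.
    by apply: (nil_B n2); rewrite /hh gu !subr0 raddfB -e2 gu subr0.
  have w0 : w = 0.
    by apply: (nil_B n1); rewrite /hh e3 !subr0 gw raddfB -/w e3 subr0.
  by rewrite eb u0 w0 addr0.
exists f; split.
  split => //.
  pose binv := invF be_inj.
  have hbinv : is_hom binv.
    by move=> u v; apply: (be_inj); rewrite hbe /binv !f_invF.
  exists (1%R, fun b => - f (binv b)); split => /=.
  - by move=> u v; rewrite hbinv hf opprD.
  - split => //= b; rewrite !mulr1z.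
    have {2}-> : b = be (binv b) by rewrite /binv f_invF.
    rewrite /be -/(binv b) raddfN (homN hf) hf.
    by rewrite addrA addNr add0r subrr.
  - split => //= b; rewrite !mulr1z.
    rewrite -addrA -opprD -(hf (binv b)) -hbinv.
    have -> : b + d (f b) = be b by [].
    by rewrite /binv invF_f subrr.
have [hPA hQB] : is_hom (fun a => g (d a)) /\ is_hom (fun b => d (g b)).
  by split; apply: homC => //; exact: hd.
have [hPA' hQB'] : is_hom (fun a => g' (d a)) /\ is_hom (fun b => d (g' b)).
  by split; apply: homC => //; exact: hd.
have [eA0 eA1] : al @: kerf (fun a => g (d a)) = kerf (fun a => g' (d a)) /\
                 al @: imf (fun a => g (d a)) = imf (fun a => g' (d a)).
  apply: img_eq => //.
  - by apply: idsum_kerim => // a; rewrite hgg.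
  - by apply: idsum_kerim => // a; rewrite hgg'.
  - apply/subsetP=> _ /imsetP[a ha ->]; rewrite inE in ha.
    rewrite kA ?(eqP ha) // inE raddfB (homB hg') hgg' subrr //.
  - apply/subsetP=> _ /imsetP[_ /imsetP[a _ ->] ->].
    by rewrite iA; apply/imsetP; exists (g (d a)).
have [eB0 eB1] : be @: kerf (fun b => d (g b)) = kerf (fun b => d (g' b)) /\
                 be @: imf (fun b => d (g b)) = imf (fun b => d (g' b)).
  apply: img_eq => //.
  - by apply: idsum_kerim => // b; rewrite hgg.
  - by apply: idsum_kerim => // b; rewrite hgg'.
  - apply/subsetP=> _ /imsetP[b hb ->]; rewrite inE in hb.
    rewrite kB ?(eqP hb) // inE (homB hg') raddfB hgg' subrr //.
  - apply/subsetP=> _ /imsetP[_ /imsetP[b _ ->] ->].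
    by rewrite iB; apply/imsetP; exists (d (g b)).
rewrite /act /dec_of /=.
by rewrite -/al -/be eA0 eA1 eB0 eB1.
Qed.

Lemma subgrp_img (X Y : finZmodType) (phi : X -> Y) (S : {set X}) :
  is_hom phi -> subgrp S -> subgrp (phi @: S).
Proof.
move=> hphi hS; split; first by apply/imsetP; exists 0; rewrite ?(hom0 hphi) //; exact: subgrp0.
move=> _ _ /imsetP[x hx ->] /imsetP[y hy ->]; apply/imsetP; exists (x - y).
  by apply: hS.2.
by rewrite (homB hphi).
Qed.

Lemma idsum_img (G : finZmodType) (phi : G -> G) (S0 S1 : {set G}) :
  is_hom phi -> injective phi -> idsum [set: G] S0 S1 ->
  idsum [set: G] (phi @: S0) (phi @: S1).
Proof.
move=> hphi inj [h0 h1 hI hS]; split; try exact: subgrp_img.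
  by rewrite -imsetI ?hI ?imset_set1 ?(hom0 hphi) // => x y _ _; apply: inj.
apply/setP=> x; rewrite inE; symmetry; apply/imset2P.
have : x \in phi @: [set: G].
  have e : phi @: [set: G] = [set: G].
    by apply/eqP; rewrite eqEcard subsetT card_imset // leqnn.
  by rewrite e inE.
case/imsetP=> y _ ->.
have : y \in [set: G] by rewrite inE.
rewrite hS => /imset2P[y0 y1 hy0 hy1 ->].
exists (phi y0) (phi y1); rewrite ?hphi //; apply/imsetP; [exists y0|exists y1] => //.
Qed.

Lemma Ustar_inj f : Ustar d f ->
  [/\ is_hom f, injective (fun a => a + f (d a)) & injective (fun b => b + d (f b))].
Proof.
case=> hf [[q1 q2] [/= hq [/= e1 _] [/= _ e4]]].
rewrite mul1r in e1; subst q1.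
have e : forall b, f b + q2 b + q2 (d (f b)) = 0.
  by move=> b; have := e4 b; rewrite /= !mulr1z.
split => //.
  apply: (can_inj (g := fun a => a + q2 (d a))) => a /=.
  by rewrite raddfD hq -addrA [f _ + _]addrA e addr0.
apply: (can_inj (g := fun b => b + d (q2 b))) => b /=.
by rewrite hq raddfD -addrA [d (f _) + _]addrA -!raddfD e raddf0 addr0.
Qed.

Lemma act_DecI f x : Ustar d f -> in_DecI d x ->
  in_DecI d (act d f x) /\ #|dA1 (act d f x)| = #|dA1 x|.
Proof.
case/Ustar_inj=> hf ial ibe.
pose al := fun a => a + f (d a); pose be := fun b => b + d (f b).
have hal : is_hom al by move=> u v; rewrite /al raddfD hf addrACA.
have hbe : is_hom be by move=> u v; rewrite /be hf raddfD addrACA.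
have com : forall a, d (al a) = be (d a) by move=> a; rewrite /al /be raddfD.
case: x => A0 B0 A1 B1; case=> [[[hA0 hB0 hd0] [hA1 hB1 hd1] sA sB] inj im].
simpl in *.
rewrite /act /= -/al -/be.
have tr : forall (X : {set A}) (Y : {set B}), [set d x | x in X] \subset Y ->
    [set d x | x in al @: X] \subset be @: Y.
  move=> X Y sXY; apply/subsetP=> _ /imsetP[_ /imsetP[a ha ->] ->].
  by rewrite com; apply/imsetP; exists (d a) => //; apply: (subsetP sXY); apply/imsetP; exists a.
split; last by rewrite card_imset.
split; first split.
- by split; try exact: subgrp_img; exact: tr.
- by split; try exact: subgrp_img; exact: tr.
- exact: idsum_img.
- exact: idsum_img.
- move=> _ _ /imsetP[a ha ->] /imsetP[a' ha' ->]; rewrite !com => /ibe e.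
  by rewrite (inj _ _ ha ha' e).
- rewrite -im -!imset_comp; apply: eq_imset => a /=; exact: com.
Qed.

Lemma idsum_triv (G : finZmodType) (S S0 C : {set G}) :
  idsum S S0 C -> (#|C| <= 1)%N -> S = S0.
Proof.
move=> s hC; have c := card_idsum s.
case: s => h0 h1 _ eS.
have sub : S0 \subset S.
  apply/subsetP=> x hx; rewrite eS; rewrite -[x]addr0; apply/imset2P.
  by exists x 0 => //; exact: subgrp0.
apply/eqP; rewrite eq_sym eqEcard sub c.
have := card_gt0 h1; nia.
Qed.

Lemma DecI_card x : in_DecI d x -> #|dB1 x| = #|dA1 x|.
Proof. by case=> _ inj <-; rewrite card_in_imset. Qed.

Lemma rankmax_max x : in_DecI d x ->
  (forall y, in_DecI d y -> (#|dA1 y| <= #|dA1 x|)%N) -> DecI_max d x.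
Proof.
move=> hx hmax; split => // y hy [C [D [hCD i0A i0B i1A i1B]]].
have pA : (0 < #|dA1 x|)%N by apply: card_gt0; case: hx => [[_ [? _ _] _ _]].
have cC : (#|C| <= 1)%N.
  have := card_idsum i1A; have := hmax y hy; nia.
have cD : (#|D| <= 1)%N.
  have := card_idsum i1B; have := hmax y hy.
  rewrite -(DecI_card hx) -(DecI_card hy) in pA *; nia.
have e1 := idsum_triv i0A cC; have e2 := idsum_triv i0B cD.
have e3 := idsum_triv i1A cC; have e4 := idsum_triv i1B cD.
by case: x y hx hy e1 e2 e3 e4 {hmax pA i0A i0B i1A i1B} => ? ? ? ? [? ? ? ?] /= _ _ -> -> -> ->.
Qed.

Lemma posetmax_nil g : idem g -> DecI_max d (dec_of g) ->
  forall k, is_hom k -> nilp (hh g k).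
Proof.
move=> hg [_ hmax] k hk; apply: NNPP => hn.
have [g2 [hg2 hle hlt]] := grow hg hk hn.
have e := hmax _ (dec_of_DecI hg2) hle.
by move: hlt; have := congr1 (@dA1 _ _) e => /= ->; rewrite ltnn.
Qed.
End Main.

Theorem proposition4p8 (A B : finZmodType) (d : {additive A -> B}) :
  exists x0 : decomp A B,
    in_DecI d x0 /\
    forall x : decomp A B, DecI_max d x <-> exists f : B -> A, Ustar d f /\ x = act d f x0.
Proof.
pose idemb (G : {ffun B -> A}) := [forall u, forall v, G (u + v) == G u + G v]
   && [forall b, G (d (G b)) == G b].
pose rk (G : {ffun B -> A}) := #|imf (fun a => G (d a))|.
have i0 : idemb [ffun => 0].
  apply/andP; split; apply/forallP => u; [apply/forallP => v|]; by rewrite !ffunE ?addr0.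
case: (arg_maxnP rk i0) => G0 hG0 Gmax.
pose g0 := fun b => G0 b.
have idem_ffun : forall g : B -> A, idem d g -> idemb [ffun b => g b].
  move=> g [hg hgg]; apply/andP; split; apply/forallP => u; [apply/forallP => v|];
    by rewrite !ffunE ?hg ?hgg.
have idem_g0 : idem d g0.
  case/andP: hG0 => /forallP h1 /forallP h2; split.
    by move=> u v; apply/eqP; have := h1 u => /forallP; apply.
  by move=> b; apply/eqP; exact: h2.
have rk_eq : forall g : B -> A, rk [ffun b => g b] = #|imf (fun a => g (d a))|.
  by move=> g; rewrite /rk (imf_ext (F' := fun a => g (d a))) // => a; rewrite ffunE.
have max0 : forall y, in_DecI d y -> (#|dA1 y| <= #|dA1 (dec_of d g0)|)%N.
  move=> y /DecI_dec_of [g [hg ->]] /=.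
  by have := Gmax _ (idem_ffun g hg); rewrite rk_eq.
have nil0 : forall k, is_hom k -> nilp d (hh d g0 k).
  move=> k hk; apply: NNPP => hn.
  have [g2 [hg2 hle hlt]] := grow idem_g0 hk hn.
  by have := max0 _ (dec_of_DecI hg2); rewrite /= leqNgt hlt.
exists (dec_of d g0); split; first exact: dec_of_DecI.
move=> x; split.
- move=> hx; have [g [hg ex]] := DecI_dec_of hx.1; subst x.
  have n1 := posetmax_nil hg hx idem_g0.1.
  have n2 := nil0 g hg.1.
  have [f [hf e]] := orbit idem_g0 hg n1 n2.
  by exists f; split; last rewrite e.
- case=> f [hf ->].
  have [h1 h2] := act_DecI hf (dec_of_DecI idem_g0).
  by apply: rankmax_max => // y hy; rewrite h2; exact: max0.
Qed.
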